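(* Let $\epsilon\in(0,1)$, $u_0\in\mathbb{R}$, $h>0$, and let $(u_n)_{n\ge0}$ be a sequence of real numbers starting at $u_0$ and satisfying the Crank–Nicolson scheme $$\frac{u_n-u_{n-1}}{h}+\frac{1}{2\epsilon^2}\big(u_n^3-u_n\big)+\frac{1}{2\epsilon^2}\big(u_{n-1}^3-u_{n-1}\big)=0,\qquad n\ge1.$$ (i) If $u_0\in\{0,1,-1\}$ and $h\le 2\epsilon^2$, then $u_n=\mathrm{sign}(u_0)$ for all $n\ge1$. (ii) If $u_0\notin\{0,1,-1\}$, define $h^*(u_0,\epsilon)=\frac{2\epsilon^2}{u_0^2+|u_0|}$ if $|u_0|>1$ and $h^*(u_0,\epsilon)=\epsilon^2$ if $0<|u_0|<1$. Then $h^*>0$ and for every $h\in(0,h^*]$ the sequence $(u_n)$ is monotone and converges to $\mathrm{sign}(u_0)$ as $n\to\infty$. Moreover, $\inf_{u_0\in\mathbb{R}\setminus\{0,\pm1\}}h^*(u_0,\epsilon)=0$.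
   Context: The scheme discretizes the ODE $u'(t)+\frac{1}{\epsilon^2}(u^3-u)=0$, $u(0)=u_0$. For $h\le 2\epsilon^2$ each step equation has a unique real solution $u_n$. Here $\mathrm{sign}(0)=0$. *)

(* Defs.v *)
From Stdlib Require Import Reals.
From Coquelicot Require Import Coquelicot.
Open Scope R_scope.

Definition CN_scheme (eps h : R) (u : nat -> R) : Prop :=
  forall n : nat, (1 <= n)%nat ->
    (u n - u (n - 1)%nat) / h
    + 1 / (2 * eps ^ 2) * (u n ^ 3 - u n)
    + 1 / (2 * eps ^ 2) * (u (n - 1)%nat ^ 3 - u (n - 1)%nat) = 0.

(* h^*(u0, eps); only meaningful for u0 not in {0,1,-1}. *)
Definition hstar (u0 eps : R) : R :=
  if Rlt_dec 1 (Rabs u0) then 2 * eps ^ 2 / (u0 ^ 2 + Rabs u0) else eps ^ 2.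

Definition monotone_seq (u : nat -> R) : Prop :=
  (forall n, u n <= u (S n)) \/ (forall n, u (S n) <= u n).

(* Main.v *)
Require Import Defs.
From Stdlib Require Import Reals Lra Lia Psatz.
From Coquelicot Require Import Coquelicot.
Open Scope R_scope.

Definition Step (k : R) (u : nat -> R) : Prop :=
  forall n, u (S n) + k * (u (S n) ^ 3 - u (S n)) = u n - k * (u n ^ 3 - u n).

Lemma gdiff k x y : (y + k*(y^3-y)) - (x + k*(x^3-x)) = (y-x)*((1-k) + k*(y^2+x*y+x^2)).
Proof. ring. Qed.

Lemma quad_nonneg x y : 0 <= y^2+x*y+x^2.
Proof. nra. Qed.

Lemma gstrict k x y : 0 < k <= 1/2 -> x < y -> x + k*(x^3-x) < y + k*(y^3-y).
Proof.
  intros Hk Hxy. pose proof (gdiff k x y). pose proof (quad_nonneg x y).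
  assert (0 < (1-k) + k*(y^2+x*y+x^2)).
  { assert (0 <= k*(y^2+x*y+x^2)) by (apply Rmult_le_pos; lra). lra. }
  assert (0 < (y-x)*((1-k) + k*(y^2+x*y+x^2))) by (apply Rmult_lt_0_compat; lra).
  lra.
Qed.

Lemma small_step k x y : 0 < k <= 1/2 -> 0 < x <= 1 ->
  y + k*(y^3-y) = x - k*(x^3-x) -> x <= y <= 1.
Proof.
  intros Hk Hx E. split.
  - destruct (Rle_or_lt x y) as [H|H]; auto. exfalso.
    pose proof (gstrict k y x Hk H).
    assert (x^3 - x <= 0) by nra.
    assert (0 <= k*(-(x^3-x))) by (apply Rmult_le_pos; lra). lra.
  - destruct (Rle_or_lt y 1) as [H|H]; auto. exfalso.
    pose proof (gstrict k 1 y Hk H).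
    assert (1 - (x - k*(x^3-x)) = (1-x)*(1 - k*x - k*x^2)) by ring.
    assert (k*x <= 1/2) by nra. assert (k*x^2 <= 1/2) by nra.
    assert (0 <= (1-x)*(1 - k*x - k*x^2)) by (apply Rmult_le_pos; lra).
    lra.
Qed.

Lemma large_step k M x y : 0 < k -> k*(M^2+M) <= 1 -> 1 <= x <= M ->
  y + k*(y^3-y) = x - k*(x^3-x) -> 1 <= y <= x.
Proof.
  intros Hk HM Hx E.
  assert (Hk12 : k <= 1/2) by nra.
  assert (Hk2 : 0 < k <= 1/2) by lra. split.
  - destruct (Rle_or_lt 1 y) as [H|H]; auto. exfalso.
    pose proof (gstrict k y 1 Hk2 H).
    assert ((x - k*(x^3-x)) - 1 = (x-1)*(1 - k*(x*(x+1)))) by ring.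
    assert (x*(x+1) <= M^2+M) by nra.
    assert (k*(x*(x+1)) <= 1) by nra.
    assert (0 <= (x-1)*(1 - k*(x*(x+1)))) by (apply Rmult_le_pos; lra).
    lra.
  - destruct (Rle_or_lt y x) as [H|H]; auto. exfalso.
    pose proof (gstrict k x y Hk2 H).
    assert (0 <= x^3 - x) by nra.
    assert (0 <= k*(x^3-x)) by (apply Rmult_le_pos; lra). lra.
Qed.

Lemma lim_eq k u (L : R) : Step k u -> 0 < k -> is_lim_seq u L -> L^3 - L = 0.
Proof.
  intros HS Hk HL.
  assert (C1 : continuity_pt (fun x => x + k*(x^3-x)) L) by reg.
  assert (C2 : continuity_pt (fun x => x - k*(x^3-x)) L) by reg.
  pose proof (is_lim_seq_continuous _ _ _ C1 (proj1 (is_lim_seq_incr_1 u L) HL)) as A.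
  pose proof (is_lim_seq_continuous _ _ _ C2 HL) as B.
  apply is_lim_seq_unique in A. apply is_lim_seq_unique in B.
  assert (Lim_seq (fun n => u (S n) + k*(u (S n)^3 - u (S n))) =
          Lim_seq (fun n => u n - k*(u n^3 - u n))).
  { apply Lim_seq_ext. intro n. apply HS. }
  rewrite A, B in H. injection H. intro H'.
  assert (2*k*(L^3-L) = 0) by lra.
  apply Rmult_integral in H0. destruct H0; lra.
Qed.

Lemma pos_case k u : 0 < k -> Step k u -> 0 < u 0%nat -> u 0%nat <> 1 ->
  (1 < u 0%nat -> k*(u 0%nat^2 + u 0%nat) <= 1) -> (u 0%nat < 1 -> k <= 1/2) ->
  monotone_seq u /\ is_lim_seq u 1.
Proof.
  intros Hk HS H0 H1 Hl Hs.
  destruct (Rlt_or_le (u 0%nat) 1) as [Hlt|Hge].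
  - specialize (Hs Hlt).
    assert (Inv : forall n, u 0%nat <= u n <= 1).
    { induction n. lra.
      pose proof (small_step k (u n) (u (S n)) ltac:(lra) ltac:(lra) (HS n)). lra. }
    assert (Inc : forall n, u n <= u (S n)).
    { intro n. pose proof (Inv n).
      pose proof (small_step k (u n) (u (S n)) ltac:(lra) ltac:(lra) (HS n)). lra. }
    split. left; exact Inc.
    destruct (ex_finite_lim_seq_incr u 1 Inc (fun n => proj2 (Inv n))) as [L HL].
    pose proof (lim_eq k u L HS Hk HL).
    pose proof (is_lim_seq_le (fun _ => u 0%nat) u (u 0%nat) L (fun n => proj1 (Inv n))
                  (is_lim_seq_const _) HL) as Hb. simpl in Hb.
    assert (L*(L-1)*(L+1) = 0) by (rewrite <- H; ring).
    assert (L = 1).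
    { apply Rmult_integral in H2. destruct H2 as [H2|H2]; [|lra].
      apply Rmult_integral in H2. destruct H2; lra. }
    subst. exact HL.
  - assert (Hg : 1 < u 0%nat) by lra. specialize (Hl Hg).
    set (M := u 0%nat) in *.
    assert (Inv : forall n, 1 <= u n <= M).
    { induction n. unfold M in *; lra.
      pose proof (large_step k M (u n) (u (S n)) Hk Hl IHn (HS n)). lra. }
    assert (Dec : forall n, u (S n) <= u n).
    { intro n. pose proof (large_step k M (u n) (u (S n)) Hk Hl (Inv n) (HS n)). lra. }
    split. right; exact Dec.
    destruct (ex_finite_lim_seq_decr u 1 Dec (fun n => proj1 (Inv n))) as [L HL].
    pose proof (lim_eq k u L HS Hk HL).
    pose proof (is_lim_seq_le (fun _ => 1) u 1 L (fun n => proj1 (Inv n))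
                  (is_lim_seq_const _) HL) as Hb. simpl in Hb.
    assert (L*(L-1)*(L+1) = 0) by (rewrite <- H; ring).
    assert (L = 1).
    { apply Rmult_integral in H2. destruct H2 as [H2|H2]; [|lra].
      apply Rmult_integral in H2. destruct H2; lra. }
    subst. exact HL.
Qed.

Lemma step_opp k u : Step k u -> Step k (fun n => - u n).
Proof.
  intros HS n. pose proof (HS n).
  replace ((- u (S n))^3) with (-(u (S n)^3)) by ring.
  replace ((- u n)^3) with (-(u n^3)) by ring. lra.
Qed.

Lemma CN_Step eps h u : 0 < eps -> 0 < h -> CN_scheme eps h u -> Step (h/(2*eps^2)) u.
Proof.
  intros He Hh HC n. specialize (HC (S n) ltac:(lia)).
  replace (S n - 1)%nat with n in HC by lia.
  assert (Hp : 0 < eps^2) by (apply pow_lt; lra).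
  assert (E : h * ((u (S n) - u n) / h + 1 / (2 * eps ^ 2) * (u (S n) ^ 3 - u (S n)) +
     1 / (2 * eps ^ 2) * (u n ^ 3 - u n)) = 0) by (rewrite HC; ring).
  field_simplify in E; try lra.
  apply (Rmult_eq_reg_r (2*eps^2)); [|lra].
  field_simplify; try lra. unfold Rdiv in E. apply Rmult_integral in E. destruct E as [E|E]; [lra|]. exfalso; apply (Rinv_neq_0_compat (2*eps^2)); lra.
Qed.

Lemma fixed_step k x y : 0 < k <= 1 -> x^3 - x = 0 ->
  y + k*(y^3-y) = x - k*(x^3-x) -> y = x.
Proof.
  intros Hk Hx E. pose proof (gdiff k x y).
  assert (P : (y-x)*((1-k) + k*(y^2+x*y+x^2)) = 0) by (rewrite Hx in E, H; lra).
  apply Rmult_integral in P. destruct P as [P|P]; [lra|].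
  pose proof (quad_nonneg x y).
  assert (0 <= k*(y^2+x*y+x^2)) by (apply Rmult_le_pos; lra).
  assert (k*(y^2+x*y+x^2) = 0) by lra.
  apply Rmult_integral in H2. destruct H2 as [H2|H2]; [lra|].
  assert (4*(y^2+x*y+x^2) = (2*x+y)^2 + 3*y^2) by ring.
  assert (y = 0) by nra. assert (x = 0) by nra. lra.
Qed.

Lemma gen_case k u : 0 < k -> Step k u -> u 0%nat <> 0 -> u 0%nat <> 1 -> u 0%nat <> -1 ->
  (1 < Rabs (u 0%nat) -> k*(u 0%nat^2 + Rabs (u 0%nat)) <= 1) ->
  (Rabs (u 0%nat) < 1 -> k <= 1/2) ->
  monotone_seq u /\ is_lim_seq u (sign (u 0%nat)).
Proof.
  intros Hk HS n0 n1 nm1 Hl Hs.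
  destruct (Rlt_or_le 0 (u 0%nat)) as [Hp|Hn].
  - rewrite Rabs_pos_eq in Hl, Hs by lra. rewrite sign_eq_1 by lra.
    apply (pos_case k); auto.
  - assert (Hn' : u 0%nat < 0) by lra.
    rewrite Rabs_left in Hl, Hs by lra. rewrite sign_eq_m1 by lra.
    destruct (pos_case k (fun n => - u n) Hk (step_opp k u HS)) as [Hm Hlim]; simpl.
    + lra.
    + lra.
    + intro H; specialize (Hl H). replace ((- u 0%nat)^2) with (u 0%nat^2) by ring. lra.
    + intro H; apply Hs; lra.
    + split.
      * destruct Hm as [Hm|Hm]; [right|left]; intro n; specialize (Hm n); lra.
      * apply is_lim_seq_opp in Hlim. simpl in Hlim.
        eapply is_lim_seq_ext; [|exact Hlim]. intro n; simpl; ring.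
Qed.

Theorem theorem3p2 (eps : R) (heps : 0 < eps < 1) :
  (forall (u0 h : R) (u : nat -> R),
     0 < h -> u 0%nat = u0 -> CN_scheme eps h u ->
     ((u0 = 0 \/ u0 = 1 \/ u0 = -1) -> h <= 2 * eps ^ 2 ->
        forall n : nat, (1 <= n)%nat -> u n = sign u0)
     /\
     (u0 <> 0 -> u0 <> 1 -> u0 <> -1 ->
        0 < hstar u0 eps /\
        (h <= hstar u0 eps -> monotone_seq u /\ is_lim_seq u (sign u0))))
  /\
  is_glb_Rbar (fun x => exists u0, u0 <> 0 /\ u0 <> 1 /\ u0 <> -1 /\ x = hstar u0 eps)
    (Finite 0).
Proof.
  assert (He2 : 0 < eps^2) by (apply pow_lt; lra).
  split.
  - intros u0 h u Hh Hu0 HC.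
    pose proof (CN_Step eps h u ltac:(lra) Hh HC) as HS.
    set (k := h/(2*eps^2)) in *.
    assert (Hk : 0 < k) by (unfold k; apply Rdiv_lt_0_compat; lra).
    split.
    + intros Hcase Hh2.
      assert (Hk1 : k <= 1) by (unfold k; apply Rle_div_l; lra).
      assert (Hfix : u0^3 - u0 = 0) by (destruct Hcase as [->|[->| ->]]; ring).
      assert (Hall : forall n, u n = u0).
      { induction n. exact Hu0.
        rewrite <- IHn. apply (fixed_step k (u n) (u (S n))); [lra| rewrite IHn; exact Hfix | exact (HS n)]. }
      intros n _. rewrite Hall.
      destruct Hcase as [->|[->| ->]].
      * now rewrite sign_0.
      * rewrite sign_eq_1; lra.
      * rewrite sign_eq_m1; lra.
    + intros n0 n1 nm1.
      assert (HD : 0 < u0^2 + Rabs u0).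
      { pose proof (Rabs_pos u0). assert (Rabs u0 <> 0) by (intro; apply n0; now apply Rabs_eq_0). nra. }
      subst u0.
      unfold hstar; destruct (Rlt_dec 1 (Rabs (u 0%nat))) as [Hr|Hr].
      * split. apply Rdiv_lt_0_compat; lra.
        intro Hh2. apply (gen_case k); auto.
        -- intros _.
           assert (h * (u 0%nat ^ 2 + Rabs (u 0%nat)) <= 2*eps^2).
           { apply (Rmult_le_compat_r (u 0%nat ^ 2 + Rabs (u 0%nat))) in Hh2; [|lra].
             replace (2 * eps ^ 2 / (u 0%nat ^ 2 + Rabs (u 0%nat)) * (u 0%nat ^ 2 + Rabs (u 0%nat)))
               with (2*eps^2) in Hh2 by (field; lra). exact Hh2. }
           replace (k * (u 0%nat ^ 2 + Rabs (u 0%nat))) with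
             ((h * (u 0%nat ^ 2 + Rabs (u 0%nat))) / (2*eps^2)) by (unfold k; field; lra).
           apply Rle_div_l; lra.
        -- intro; lra.
      * split. exact He2.
        intro Hh2. apply (gen_case k); auto.
        -- intro; lra.
        -- intros _. unfold k. apply Rle_div_l; lra.
  - split.
    + intros x [u0 [n0 [n1 [nm1 ->]]]]. simpl.
      unfold hstar; destruct (Rlt_dec 1 (Rabs u0)).
      * left. apply Rdiv_lt_0_compat; [lra|]. pose proof (Rabs_pos u0). nra.
      * lra.
    + intros b Hb. destruct b as [r| |]; simpl.
      * destruct (Rle_or_lt r 0) as [H|H]; auto. exfalso.
        set (v := 1 + 2*eps^2/r).
        assert (Hv : 2*eps^2/r > 0) by (apply Rdiv_lt_0_compat; lra).
        assert (Hv1 : 1 < v) by (unfold v; lra).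
        specialize (Hb (hstar v eps)). simpl in Hb.
        assert (Hle : r <= hstar v eps).
        { apply Hb. exists v. repeat split; try lra. }
        unfold hstar in Hle. rewrite Rabs_pos_eq in Hle by lra.
        destruct (Rlt_dec 1 v) as [_|c]; [|lra].
        assert (2*eps^2/(v^2+v) < r).
        { apply Rlt_div_l; [nra|].
          assert (r * v = r + 2*eps^2) by (unfold v; field; lra).
          assert (0 <= r * v^2) by (apply Rmult_le_pos; nra). nra. }
        lra.
      * apply (Hb (hstar 2 eps)). exists 2. repeat split; lra.
      * exact I.
Qed.
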